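(* Let $\mathcal{G}=(V,L)$ be a finite connected undirected graph with monitor set $M$ and non-monitor set $N=V\setminus M$, $\sigma=|N|$, with measurement paths given by Controllable Simple-path Probing (CSP). For $v\in N$ let $\pi_v:=\min\big(\min_{m\in M}|C_{\mathcal{G}_m}(v,m')|,\ |C_{\mathcal{G}^*}(v,m')|-1\big)$. For $1\le k\le\sigma-1$ let $S^{\mathrm{outer}}(k):=\{v\in N:\pi_v\ge k\}$ and $S^{\mathrm{inner}}(k):=\{v\in N:\pi_v\ge k+1\}$, and let $S^*_{\mathrm{CSP}}(k)$ be the maximum-cardinality $k$-identifiable subset of $N$. Then $S^{\mathrm{inner}}(k)\subseteq S^*_{\mathrm{CSP}}(k)\subseteq S^{\mathrm{outer}}(k)$.
   Context: Under CSP, the measurement paths $P$ are all simple paths (no repeated nodes) in $\mathcal{G}$ between two distinct monitors. A failure set is any $F\subseteq N$; a path fails iff it traverses a node of $F$. $P_F$ is the set of paths in $P$ traversing a node of $F$; $F_1,F_2$ distinguishable iff $P_{F_1}\ne P_{F_2}$. $S\subseteq N$ is $k$-identifiable if any two failure sets $F_1,F_2$ with $|F_1|,|F_2|\le k$ and $F_1\cap S\ne F_2\cap S$ are distinguishable; the maximum-cardinality $k$-identifiable subset of $N$ is unique. For $M'\subseteq M$, $\mathcal{N}(M')$ is the set of non-monitors adjacent to a monitor in $M'$. $\mathcal{G}^*$: delete all monitors from $\mathcal{G}$, add a virtual node $m'$, link $m'$ to every node of $\mathcal{N}(M)$. For $m\in M$, $\mathcal{G}_m$: delete all monitors, add a virtual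 node $m'$, link $m'$ to every node of $\mathcal{N}(M\setminus\{m\})$. For nodes $s,t$ of a graph $\mathcal{H}$, $C_{\mathcal{H}}(s,t)$ is a minimum-cardinality set of nodes (other than $s,t$) whose deletion destroys all $s$–$t$ paths; if $s,t$ are adjacent, $C_{\mathcal{H}}(s,t):=V(\mathcal{H})\setminus\{t\}$. *)

(* Defs.v *)
From mathcomp Require Import all_boot.
Set Implicit Arguments. Unset Strict Implicit. Unset Printing Implicit Defensive.

Section Defs.
Variable T : finType.
Variable e : rel T.          (* adjacency relation of G (symmetric, irreflexive) *)
Variable M : {set T}.        (* monitors; non-monitors are N = ~: M *)

(** Measurement paths under CSP: simple paths of G (as node sequences)
    between two distinct monitors. *)
Definition is_meas_path (p : seq T) : bool :=
  if p is x :: q then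
    [&& path e x q, uniq p, x \in M, last x q \in M & x != last x q]
  else false.

Definition PF (F : {set T}) : pred (seq T) :=
  [pred p | is_meas_path p && has (fun x => x \in F) p].

Definition distinguishable (F1 F2 : {set T}) : Prop := ~ (PF F1 =i PF F2).

Definition k_identifiable (k : nat) (S : {set T}) : Prop :=
  forall F1 F2 : {set T}, F1 \subset ~: M -> F2 \subset ~: M ->
    #|F1| <= k -> #|F2| <= k -> F1 :&: S != F2 :&: S ->
    distinguishable F1 F2.

Definition max_k_identifiable (k : nat) (S : {set T}) : Prop :=
  [/\ S \subset ~: M, k_identifiable k S &
      forall S' : {set T}, S' \subset ~: M -> k_identifiable k S' -> #|S'| <= #|S| ].

Definition nbrs (A : {set T}) : {set T} :=
  [set y | (y \notin M) && [exists m in A, e m y]].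

(** Auxiliary graph (vertex set, edges) on option T, where None is the
    virtual node m': monitors deleted, m' linked to every node of N(A).
    G* uses A = M, G_m uses A = M :\ m. *)
Definition aux_V : {set option T} := None |: [set Some x | x in ~: M].

Definition aux_e (A : {set T}) : rel (option T) := fun a b =>
  match a, b with
  | Some x, Some y => [&& x \notin M, y \notin M & e x y]
  | None, Some y | Some y, None => y \in nbrs A
  | None, None => false
  end.
End Defs.

Section Cut.
Variable U : finType.
Variables (VH : {set U}) (eH : rel U).

Definition separates (s t : U) (C : {set U}) : bool :=
  (C \subset VH :\: [set s; t]) &&
  ~~ connect (fun x y => [&& eH x y, x \in VH :\: C & y \in VH :\: C]) s t.

(* if s,t adjacent, C_H(s,t) := V(H) \ {t}, of size |V(H)| - 1 (t in V(H));
   otherwise the minimum size of a separating set (the default #|VH| of the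
   min is never reached since VH :\: [set s; t] separates). *)
Definition cut_size (s t : U) : nat :=
  if eH s t then #|VH :\ t|
  else \big[minn/#|VH|]_(C : {set U} | separates s t C) #|C|.
End Cut.

Definition pi_v (T : finType) (e : rel T) (M : {set T}) (v : T) : nat :=
  \big[minn/(cut_size (aux_V M) (aux_e e M M) (Some v) None - 1)]_(m in M)
     cut_size (aux_V M) (aux_e e M (M :\ m)) (Some v) None.

(* Main.v *)
Require Import Defs.
From mathcomp Require Import all_boot zify.
Set Implicit Arguments. Unset Strict Implicit. Unset Printing Implicit Defensive.

Ltac cnt_lia :=
  rewrite ?[nat_of_bool true]/1 ?[nat_of_bool false]/0;
  repeat match goal with |- context [nat_of_bool ?b] =>
    lazymatch b with true => fail | false => fail | _ =>
    let c := fresh "b" in move: (leq_b1 b); move: (nat_of_bool b) => c end end;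
  repeat match goal with |- context [count ?a ?s] =>
    let c := fresh "c" in move: (count a s) => c end;
  repeat match goal with H : ?P |- _ => match type of P with Prop => clear H end end;
  lia.

Section Fan.
Variable T : finType.
Variable r : rel T.

Definition avoid (c : T) : rel T := fun x y => [&& r x y, x != c & y != c].

Lemma avoid_path c x p : path (avoid c) x p -> path r x p && (c \notin p).
Proof.
elim: p x => //= y p IH x /andP[/and3P[rxy _ yc] /IH /andP[py cp]].
by rewrite inE eq_sym (negbTE yc) rxy py cp.
Qed.

Lemma conn_uniq (rr : rel T) x y : connect rr x y ->
  exists p, [/\ path rr x p, last x p = y & uniq (x :: p)].
Proof.
case/connectP => p pp ->; case: (shortenP pp) => p' pp' up' _.
by exists p'.
Qed.

Lemma first_split (P : pred T) p : has P p ->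
  exists A0 a A1, [/\ p = A0 ++ a :: A1, P a & all (predC P) A0].
Proof.
elim: p => //= y p IH; case Py: (P y) => /= H.
  by exists [::], y, p.
have [A0 [a [A1 [-> Pa HA]]]] := IH H.
by exists (y :: A0), a, A1; rewrite /= Py.
Qed.

Lemma last_split (P : pred T) p : has P p ->
  exists s1 u s2, [/\ p = s1 ++ u :: s2, P u & all (predC P) s2].
Proof.
elim: p => //= y p IH; case Hp: (has P p).
  move=> _; have [s1 [u [s2 [-> Pu HA]]]] := IH Hp.
  by exists (y :: s1), u, s2.
rewrite orbF => Py; exists [::], y, p; split => //.
by rewrite all_predC Hp.
Qed.

Lemma uniqE (s : seq T) : uniq s <-> forall y, count_mem y s <= 1.
Proof.
split.
  by move=> u y; rewrite count_uniq_mem //; case: (_ \in _).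
move=> H; apply: count_mem_uniq => y; have := H y.
case: (boolP (y \in s)) => [ys|/count_memPn -> //].
have : count_mem y s != 0 by apply/eqP => /count_memPn; rewrite ys.
lia.
Qed.

Lemma disj_cnt (D R : seq T) y : all (fun z => z \notin D) R ->
  count_mem y R = 0 \/ count_mem y D = 0.
Proof.
move=> H; case: (boolP (y \in R)) => yR.
  by right; apply/count_memPn; exact: (allP H y yR).
by left; apply/count_memPn.
Qed.

Lemma nin_cnt x (s : seq T) y : x \notin s -> count_mem y s = 0 \/ nat_of_bool (x == y) = 0.
Proof.
case: (eqVneq x y) => [<- H|]; [left; exact/count_memPn | by right].
Qed.

Lemma neq_cnt (a b y : T) : a != b -> nat_of_bool (a == y) = 0 \/ nat_of_bool (b == y) = 0.
Proof. by case: (eqVneq a y) => [<-|]; [rewrite eq_sym => /negbTE ->; right|left]. Qed.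

Lemma path_suffix x R s1 u s2 : x :: R = s1 ++ u :: s2 -> path r x R ->
  path r u s2 /\ last x R = last u s2.
Proof.
case: s1 => [|z s1] /= [-> ->] //.
by rewrite cat_path last_cat /= => /andP[_ /andP[_ ->]].
Qed.

Definition fan v (X : {set T}) := exists A B,
  [/\ path r v A, path r v B, uniq (v :: A ++ B), last v A \in X & last v B \in X].

Definition HypC v (X : {set T}) :=
  forall c, c != v -> exists2 x, x \in X & connect (avoid c) v x.

Lemma fan_sym v (X : {set T}) A B : [/\ path r v A, path r v B, uniq (v :: A ++ B),
  last v A \in X & last v B \in X] -> fan v X.
Proof.
by case=> *; exists B, A; split => //; rewrite cons_uniq mem_cat orbC -mem_cat
  uniq_catC -cons_uniq.
Qed.

Lemma cycle_fan v (X : {set T}) A0 B0 x : x \in X -> v \notin X ->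
  path r v (rcons A0 x) -> path r v (rcons B0 x) -> uniq (v :: x :: A0 ++ B0) ->
  HypC v X -> fan v X.
Proof.
move=> xX vX pA pB U HC.
have xv : x != v by apply: contraNneq vX => <-.
have [y yX cy] := HC x xv.
have [R [pR lR uR]] := conn_uniq cy.
case/andP: (avoid_path pR) => {}pR xR.
have hD : has (mem (v :: A0 ++ B0)) (v :: R) by rewrite /= mem_head.
have [s1 [u [s2 [E uD s2D]]]] := last_split hD.
have [ps2 ls2] := path_suffix E pR.
rewrite lR in ls2.
have U2 := uR; rewrite E in U2.
have xs2 : x \notin s2.
  apply: contra xR => xs2; have : x \in v :: R by rewrite E mem_cat inE xs2 !orbT.
  by rewrite inE (negbTE xv).
have s2D' : all (fun z => z \notin v :: A0 ++ B0) s2 by [].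
move: uD; rewrite /= inE mem_cat => /orP[/eqP uv | /orP[uA|uB]].
- subst u; exists s2, (rcons A0 x); split; [done|done| |by rewrite -ls2 | by rewrite last_rcons].
  apply/uniqE => z; have := (uniqE _).1 U z; have := (uniqE _).1 U2 z.
  have := disj_cnt z s2D'; have := nin_cnt z xs2.
  rewrite /= !count_cat -!cats1 !count_cat /=; cnt_lia.
- move: pA U s2D'; case/splitPr: uA => A1 A2 pA U s2D'.
  exists (A1 ++ u :: s2), (rcons B0 x); split; [ | done | | by rewrite last_cat /= -ls2 | by rewrite last_rcons].
  + move: pA; rewrite rcons_cat !cat_path /= => /andP[-> /andP[-> _]] /=; exact: ps2.
  apply/uniqE => z; have := (uniqE _).1 U z; have := (uniqE _).1 U2 z.
  have := disj_cnt z s2D'; have := nin_cnt z xs2.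
  rewrite /= !count_cat /= -!cats1 !count_cat /=; cnt_lia.
- move: pB U s2D'; case/splitPr: uB => B1 B2 pB U s2D'.
  exists (rcons A0 x), (B1 ++ u :: s2); split; [ done | | | by rewrite last_rcons | by rewrite last_cat /= -ls2].
  + move: pB; rewrite rcons_cat !cat_path /= => /andP[-> /andP[-> _]] /=; exact: ps2.
  apply/uniqE => z; have := (uniqE _).1 U z; have := (uniqE _).1 U2 z.
  have := disj_cnt z s2D'; have := nin_cnt z xs2.
  rewrite /= !count_cat /= -!cats1 !count_cat /=; cnt_lia.
Qed.

Lemma edge_into (X : {set T}) x p : path r x p -> last x p \in X -> x \notin X ->
  exists w z, [/\ w \notin X, z \in X & r w z].
Proof.
elim: p x => [|y p IH] x /=; first by move=> _ ->.
move=> /andP[rxy py] ly xX; case yX: (y \in X); first by exists x, y.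
by apply: (IH y py ly); rewrite yX.
Qed.

Lemma has_last (P : {set T}) x s : last x s \in P -> x \notin P -> has (mem P) s.
Proof.
move=> h xP; apply/hasP; exists (last x s) => //.
have := mem_last x s; rewrite inE => /orP[/eqP E|//].
by move: h; rewrite E => h; rewrite h in xP.
Qed.

Lemma nin_all (X : {set T}) z s : z \in X -> all (fun y => y \notin X) s -> z \notin s.
Proof. by move=> zX HA; apply/negP => /(allP HA); rewrite zX. Qed.

Lemma ext_fan v (X : {set T}) w z A0 a B0 : a \in X -> w \notin X -> v \notin X ->
  z \in X -> r w z -> path r v (rcons A0 a) -> path r v (rcons B0 w) ->
  uniq (v :: rcons A0 a ++ rcons B0 w) -> all (fun y => y \notin X) A0 ->
  all (fun y => y \notin X) B0 -> HypC v X -> fan v X.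
Proof.
move=> aX wX vX zX rwz pA pB U HA HB HC.
case: (eqVneq z a) => [za|za].
  subst z; apply: (cycle_fan (B0 := rcons B0 w) aX vX pA _ _ HC).
    by rewrite rcons_path pB last_rcons.
  apply/uniqE => y; have := (uniqE _).1 U y.
  rewrite /= !count_cat -!cats1 /= !count_cat /=; cnt_lia.
exists (rcons A0 a), (rcons (rcons B0 w) z); split => //.
- by rewrite rcons_path pB last_rcons.
- apply/uniqE => y; have := (uniqE _).1 U y.
  have := nin_cnt y (nin_all zX HA); have := nin_cnt y (nin_all zX HB).
  have zv : z != v by apply: contraNneq vX => <-.
  have zw : z != w by apply: contraNneq wX => <-.
  have := neq_cnt y zv; have := neq_cnt y za; have := neq_cnt y zw.
  rewrite /= !count_cat -!cats1 /= !count_cat /=; cnt_lia.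
- by rewrite last_rcons.
- by rewrite last_rcons.
Qed.

Lemma fan_main n : forall v (X : {set T}), #|~: X| <= n -> v \notin X ->
  (exists2 x, x \in X & connect r v x) -> HypC v X -> fan v X.
Proof.
elim: n => [|n IH] v X hn vX [x xX cx] HC.
  have : 0 < #|~: X| by apply/card_gt0P; exists v; rewrite inE.
  lia.
have cx' := cx; case/connectP: cx => p pp lp.
rewrite lp in xX.
have [w [z [wX zX rwz]]] := edge_into pp xX vX.
case: (eqVneq w v) => [wv|wv].
  subst w; have zv : z != v by apply: contraNneq vX => <-.
  have [y yX cy] := HC z zv; have [Q [pQ lQ uQ]] := conn_uniq cy.
  case/andP: (avoid_path pQ) => pQ' zQ.
  exists [:: z], Q; split => //=.
  - by rewrite rwz.
  - by move: uQ => /= /andP[vQ ->]; rewrite inE negb_or eq_sym zv vQ zQ.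
  - by rewrite lQ.
set X' := w |: X.
have hn' : #|~: X'| <= n.
  have E : ~: X' = ~: X :\ w by apply/setP => t; rewrite !inE negb_or andbC.
  have := cardsD1 w (~: X); rewrite inE wX E /=; lia.
have vX' : v \notin X' by rewrite !inE negb_or vX andbT; apply: contra_neq wv => ->.
have H0' : exists2 x, x \in X' & connect r v x.
  by exists (last v p); [rewrite inE xX orbT | rewrite -lp].
have HC' : HypC v X'.
  by move=> c cv; have [y yX cy] := HC c cv; exists y; rewrite // inE yX orbT.
have [A [B [pA pB U lA lB]]] := IH v X' hn' vX' H0' HC'.
have [A0 [a [A1 [EA aX' HA]]]] := first_split (has_last lA vX').
have [B0 [b [B1 [EB bX' HB]]]] := first_split (has_last lB vX').
have pA' : path r v (rcons A0 a).
  by move: pA; rewrite EA cat_path /= rcons_path => /andP[-> /andP[-> _]].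
have pB' : path r v (rcons B0 b).
  by move: pB; rewrite EB cat_path /= rcons_path => /andP[-> /andP[-> _]].
have U' : uniq (v :: rcons A0 a ++ rcons B0 b).
  apply/uniqE => y; have := (uniqE _).1 U y; rewrite EA EB.
  rewrite /= !count_cat -!cats1 /= !count_cat /=; cnt_lia.
have HA' : all (fun y => y \notin X) A0.
  by apply: sub_all HA => t; rewrite /= inE negb_or => /andP[_ ->].
have HB' : all (fun y => y \notin X) B0.
  by apply: sub_all HB => t; rewrite /= inE negb_or => /andP[_ ->].
have inX t : t \in X' -> t != w -> t \in X.
  by rewrite !inE => /orP[/eqP ->|//]; rewrite eqxx.
case: (eqVneq a w) => [aw|aw]; case: (eqVneq b w) => [bw|bw].
- subst a b; exfalso; have := (uniqE _).1 U' w.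
  rewrite /= !count_cat -!cats1 /= !count_cat /= eqxx; cnt_lia.
- subst a; apply: (ext_fan (inX _ bX' bw) wX vX zX rwz pB' pA' _ HB' HA' HC).
  apply/uniqE => y; have := (uniqE _).1 U' y.
  rewrite /= !count_cat -!cats1 /= !count_cat /=; cnt_lia.
- subst b; exact: (ext_fan (inX _ aX' aw) wX vX zX rwz pA' pB' U' HA' HB' HC).
- by exists (rcons A0 a), (rcons B0 b); rewrite !last_rcons inX // inX.
Qed.

End Fan.

Section BigMin.
Variables (I : finType) (P : pred I) (F : I -> nat) (d : nat).
Lemma bigmin_le_seq i (r : seq I) : i \in r -> P i -> \big[minn/d]_(j <- r | P j) F j <= F i.
Proof.
elim: r => // a r IH; rewrite inE big_cons => /orP[/eqP <- -> | ir Pi].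
  exact: geq_minl.
case: ifP => _; last exact: IH.
by rewrite geq_min IH ?orbT.
Qed.
Lemma bigmin_le i : P i -> \big[minn/d]_(j | P j) F j <= F i.
Proof. by move=> Pi; apply: bigmin_le_seq => //; rewrite mem_index_enum. Qed.
Lemma bigmin_led : \big[minn/d]_(j | P j) F j <= d.
Proof. by elim/big_rec: _ => // j x _ h; rewrite geq_min h orbT. Qed.
Lemma bigmin_wit n : \big[minn/d]_(j | P j) F j <= n ->
  d <= n \/ exists2 i, P i & F i <= n.
Proof.
apply: (big_ind (fun x => x <= n -> _)); first by left.
  by move=> x y Kx Ky; rewrite geq_min => /orP[/Kx|/Ky].
by move=> i Pi h; right; exists i.
Qed.
End BigMin.

Section G.
Variables (T : finType) (e : rel T) (M : {set T}).
Hypothesis esym : symmetric e.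

Local Notation VH := (aux_V M).
Definition res (A C : {set T}) : rel (option T) := fun x y =>
  [&& aux_e e M A x y, x \in VH :\: (Some @: C) & y \in VH :\: (Some @: C)].
Definition rr (A C : {set T}) : rel T := fun x y =>
  [&& e x y, x \notin M, x \notin C, y \notin C & (y \notin M) || (y \in A)].

Lemma inSC x (C : {set T}) : (Some x \in Some @: C) = (x \in C).
Proof. by rewrite mem_imset //; exact: Some_inj. Qed.
Lemma NoneSC (C : {set T}) : (None \in Some @: C) = false.
Proof. by apply/imsetP => -[x _]. Qed.
Lemma inVH x : (Some x \in VH) = (x \notin M).
Proof. by rewrite /VH /aux_V !inE /= inSC inE. Qed.
Lemma NoneVH : None \in VH.
Proof. by rewrite /VH /aux_V !inE. Qed.
Lemma cardVH : #|VH| = #|~: M|.+1.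
Proof.
rewrite (cardsD1 None) NoneVH add1n; congr _.+1.
have -> : VH :\ None = Some @: ~: M.
  apply/setP => -[x|]; rewrite !inE ?inSC ?NoneSC ?inVH ?inE //.
by rewrite card_imset //; exact: Some_inj.
Qed.
Lemma cardVH1 : #|VH :\ None| = #|~: M|.
Proof. have h := cardsD1 None VH; rewrite NoneVH cardVH add1n in h; by case: h. Qed.

Lemma aux_conn_gen (A C : {set T}) v0 : A \subset M -> C \subset ~: M ->
  forall p x, path (res A C) (Some x) p -> None = last (Some x) p ->
  connect (rr A C) v0 x -> exists2 m, m \in A & connect (rr A C) v0 m.
Proof.
move=> AM CM; elim=> [|b p IH] x //=.
case: b => [y|] /andP[/and3P[hxy hx hy] pp] lp c0x.
  apply: (IH y pp lp); apply: connect_trans c0x (connect1 _).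
  move: hxy hx hy; rewrite /aux_e !in_setD !inSC !inVH.
  by case/and3P=> xM yM exy /andP[xC _] /andP[yC _]; rewrite /rr exy xM xC yC yM.
move: hxy hx; rewrite /aux_e /nbrs !inE !inSC => /andP[xM /existsP[m /andP[mA emx]]].
case/andP=> xC _; exists m => //; apply: connect_trans c0x (connect1 _).
have mM : m \in M := subsetP AM m mA.
have mC : m \notin C by apply: contraL mM => /(subsetP CM); rewrite inE.
by rewrite /rr esym emx xM xC mC mA orbT.
Qed.

Lemma aux_conn (A C : {set T}) v : A \subset M -> C \subset ~: M ->
  connect (res A C) (Some v) None -> exists2 m, m \in A & connect (rr A C) v m.
Proof.
move=> AM CM /connectP[p pp lp]; exact: (aux_conn_gen AM CM pp lp (connect0 _ _)).
Qed.

Lemma cut_le (A C : {set T}) v : A \subset M -> C \subset ~: M -> v \notin M ->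
  v \notin C -> ~~ [exists m in A, connect (rr A C) v m] ->
  cut_size VH (aux_e e M A) (Some v) None <= #|C|.
Proof.
move=> AM CM vM vC H0.
have H : ~ (exists2 m, m \in A & connect (rr A C) v m).
  by move=> [m mA c]; move/negP: H0; apply; apply/existsP; exists m; rewrite mA.
rewrite /cut_size; case: ifP => adj.
  exfalso; apply: H; move: adj; rewrite /aux_e /nbrs inE => /andP[_ /existsP[m /andP[mA emv]]].
  exists m => //; apply: connect1.
  have mM : m \in M := subsetP AM m mA.
  have mC : m \notin C by apply: contraL mM => /(subsetP CM); rewrite inE.
  by rewrite /rr esym emv vM vC mC mA orbT.
have sep : separates VH (aux_e e M A) (Some v) None (Some @: C).
  apply/andP; split.
    apply/subsetP => o /imsetP[c cC ->]; rewrite !inE /= inSC inE.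
    have cM : c \notin M by have := subsetP CM c cC; rewrite inE.
    rewrite cM andbT; apply/norP; split => //; apply: contraNneq vC => -[<-]. done.
  apply/negP => hc; apply: H; exact: (aux_conn AM CM hc).
apply: leq_trans (bigmin_le (fun C : {set option T} => #|C|) #|aux_V M| sep) _.
by rewrite card_imset //; exact: Some_inj.
Qed.

Lemma cut_wit (A : {set T}) v j : v \notin M ->
  cut_size VH (aux_e e M A) (Some v) None <= j -> j < #|~: M| ->
  exists C : {set T}, [/\ C \subset ~: M, v \notin C, #|C| <= j &
    ~~ connect (res A C) (Some v) None].
Proof.
move=> vM; rewrite /cut_size; case: ifP => adj.
  by rewrite cardVH1; lia.
case/bigmin_wit => [|[C0 /andP[sub nc] hC0]] hj; first by rewrite cardVH in hj *; lia.
set C := [set x | Some x \in C0].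
have E : C0 = Some @: C.
  apply/setP => -[x|]; first by rewrite inSC inE.
  rewrite NoneSC; apply/negP => /(subsetP sub); by rewrite !inE eqxx orbT.
exists C; split.
- apply/subsetP => x; rewrite !inE => /(subsetP sub).
  by rewrite in_setD inVH => /andP[_ ->].
- by rewrite inE; apply/negP => /(subsetP sub); rewrite !inE eqxx.
- by move: hC0; rewrite E card_imset //; exact: Some_inj.
- by rewrite E in nc.
Qed.


Lemma get_path (A C : {set T}) v k' : A \subset M -> C \subset ~: M -> v \notin M ->
  v \notin C -> #|C| < k' -> k' <= cut_size VH (aux_e e M A) (Some v) None ->
  exists2 m, m \in A & connect (rr A C) v m.
Proof.
move=> AM CM vM vC hC hk.
case: (boolP [exists m in A, connect (rr A C) v m]) => [/existsP[m /andP[mA c]]|h].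
  by exists m.
have := cut_le AM CM vM vC h; lia.
Qed.

Lemma conn_mono (r1 r2 : rel T) : subrel r1 r2 -> forall x y, connect r1 x y -> connect r2 x y.
Proof.
move=> h x y /connectP[p pp ->]; apply/connectP; exists p => //; exact: sub_path h _ _ pp.
Qed.

Definition eF (F : {set T}) : rel T := fun x y => [&& e x y, x \notin F & y \notin F].

Lemma eF_nodes F x p : path (eF F) x p -> all (fun y => y \notin F) p.
Proof. by elim: p x => //= y p IH x /andP[/and3P[_ _ yF] /IH ->]; rewrite yF. Qed.

Lemma inner_path v k (F : {set T}) : v \notin M -> k.+1 <= pi_v e M v ->
  F \subset ~: M -> v \notin F -> #|F| <= k ->
  exists p, [/\ is_meas_path e M p, v \in p & ~~ has (fun x => x \in F) p].
Proof.
move=> vM hpi FM vF hF; rewrite /pi_v in hpi.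
have hs : k.+2 <= cut_size VH (aux_e e M M) (Some v) None.
  have := leq_trans hpi (bigmin_led _ _ _); lia.
have hm m : m \in M -> k.+1 <= cut_size VH (aux_e e M (M :\ m)) (Some v) None.
  by move=> mM; apply: leq_trans hpi (bigmin_le _ _ mM).
have H0 : exists2 x, x \in M & connect (eF F) v x.
  have hF2 : #|F| < k.+2 by lia.
  have [m mM c] := get_path (subxx M) FM vM vF hF2 hs.
  exists m => //; apply: conn_mono c => x y /and5P[exy _ xF yF _].
  by rewrite /eF exy xF yF.
have HC : HypC (eF F) v M.
  move=> c cv; case: (boolP (c \in F)) => cF.
    have [x xM c0] := H0; exists x => //; apply: conn_mono c0 => a b /and3P[eab aF bF].
    rewrite /avoid /eF eab aF bF /=.
    by apply/andP; split; [apply: contraNneq aF => -> | apply: contraNneq bF => ->].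
  case: (boolP (c \in M)) => cM.
    have sub : M :\ c \subset M by apply: subD1set.
    have [m mM c0] := get_path sub FM vM vF (leq_ltn_trans hF (ltnSn k)) (hm c cM).
    exists m; first by move: mM; rewrite !inE => /andP[_ ->].
    apply: conn_mono c0 => a b /and5P[eab aM aF bF bM].
    rewrite /avoid /eF eab aF bF /=; apply/andP; split.
      by apply: contraNneq aM => ->.
    by move: bM; rewrite !inE; case: (eqVneq b c) => [->|//]; rewrite cM.
  have CM : c |: F \subset ~: M.
    by apply/subsetP => x; rewrite !inE => /orP[/eqP ->|/(subsetP FM)]; rewrite ?inE.
  have vC : v \notin c |: F by rewrite !inE negb_or vF andbT eq_sym.
  have hC : #|c |: F| < k.+2 by rewrite cardsU1; case: (_ \notin _) => /=; lia.
  have [m mM c0] := get_path (subxx M) CM vM vC hC hs.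
  exists m => //; apply: conn_mono c0 => a b /and5P[eab aM aC bC _].
  move: aC bC; rewrite !inE !negb_or => /andP[ac aF] /andP[bc bF].
  by rewrite /avoid /eF eab aF bF ac bc.
have [A [B [pA pB U lA lB]]] := fan_main (r := eF F) (n := #|~: M|) (leqnn _) vM H0 HC.
move: pA U lA; case/lastP: A => [|A' a] pA U lA; first by rewrite /= lA in vM.
rewrite last_rcons in lA.
have subE : subrel (eF F) e by move=> x y /andP[].
have pAe := sub_path subE pA; have pBe := sub_path subE pB.
have pr : path e a (rcons (rev A') v).
  have := rev_path e v (rcons A' a); rewrite last_rcons belast_rcons rev_cons => ->.
  by rewrite (@eq_path _ (fun z => e^~ z) e (fun x y => esym y x)).
have lBv : last v B != v by apply: contraNneq vM => <-.
have lBB : last v B \in B.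
  by have := mem_last v B; rewrite inE (negbTE lBv).
have cpos y s : y \in s -> 0 < count_mem y s by move=> ys; rewrite -has_count has_pred1.
exists (a :: rcons (rev A') v ++ B); split.
- rewrite /is_meas_path cat_path pr last_rcons pBe lA last_cat last_rcons lB /=.
  apply/andP; split; first change (uniq (a :: rcons (rev A') v ++ B)).
    apply/uniqE => y; have := (uniqE _).1 U y.
    rewrite /= !count_cat -!cats1 /= !count_cat /= count_rev; cnt_lia.
  apply/negP => /eqP E; have := (uniqE _).1 U a; have := cpos _ (last v B) B lBB.
  rewrite -E /= !count_cat -!cats1 /= !count_cat /= eqxx; cnt_lia.
- by rewrite inE mem_cat mem_rcons inE eqxx !orbT.
- have Hall : all (fun y => y \notin F) (v :: rcons A' a ++ B).
    by rewrite /= all_cat vF (eF_nodes pA) (eF_nodes pB).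
  apply/hasPn => y yp; apply: (allP Hall); move: yp.
  rewrite !(inE, mem_cat, mem_rcons, mem_rev).
  by move: (y == a) (y == v) (y \in A') (y \in B) => [] [] [] [].
Qed.


Lemma cpos (y : T) s : y \in s -> 0 < count_mem y s.
Proof. by move=> ys; rewrite -has_count has_pred1. Qed.

Lemma seg_conn (A C : {set T}) x q : path e x q -> x \notin M -> x \notin C ->
  last x q \in M -> all (fun y => y \notin C) q ->
  exists2 m, m \in q & (m \in M) && ((m \in A) ==> connect (res A C) (Some x) None).
Proof.
elim: q x => [|y q IH] x /=; first by move=> _ xM _ xMl; rewrite xMl in xM.
move=> /andP[exy pq] xM xC lq /andP[yC allq].
have hx : Some x \in VH :\: Some @: C by rewrite in_setD inSC inVH xC xM.
case: (boolP (y \in M)) => yM.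
  exists y; first exact: mem_head.
  rewrite yM /=; apply/implyP => yA; apply: connect1.
  rewrite /res hx in_setD NoneSC NoneVH /= /nbrs inE xM /=.
  rewrite andbT; apply/existsP; exists y; by rewrite yA esym exy.
have [m mq hm] := IH y pq yM yC lq allq.
exists m; first by rewrite inE mq orbT.
case/andP: hm => -> /implyP h; apply/implyP => mA.
apply: connect_trans (connect1 _) (h mA).
by rewrite /res hx in_setD inSC inVH yC yM /= xM yM exy.
Qed.

Lemma meas_split p v : is_meas_path e M p -> v \in p -> v \notin M ->
  exists s1 s2, [/\ path e v s1, path e v s2, last v s1 \in M & last v s2 \in M] /\
    [/\ {subset s1 <= p}, {subset s2 <= p} & forall y, y \in s1 -> y \in s2 -> False].
Proof.
case: p => [|x0 q] //= /and5P[pq uq x0M lM _] vp vM.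
have vq : v \in q by move: vp; rewrite inE => /orP[/eqP E|//]; rewrite E x0M in vM.
move: pq uq lM; case/splitPr: vq => q1 q2 pq uq lM.
move: pq; rewrite cat_path /= => /and3P[pq1 elv pq2].
exists (rev (x0 :: q1)), q2; split; split => //.
- have := rev_path e x0 (rcons q1 v); rewrite last_rcons belast_rcons => ->.
  by rewrite (@eq_path _ (fun z => e^~ z) e (fun x y => esym y x)) rcons_path pq1.
- by rewrite rev_cons last_rcons.
- by rewrite last_cat in lM.
- by move=> y; rewrite mem_rev !inE mem_cat => /orP[->|->]; rewrite ?orbT.
- by move=> y yq2; rewrite !inE mem_cat inE yq2 !orbT.
- move=> y y1 y2; have := (uniqE (x0 :: q1 ++ v :: q2)).1 uq y.
  rewrite mem_rev in y1; have := cpos y1; have := cpos y2.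
  rewrite /= !count_cat /=; cnt_lia.
Qed.

Lemma PF_eq (D : {set T}) v : v \notin D ->
  (forall p, is_meas_path e M p -> v \in p -> has (fun x => x \in D) p) ->
  PF e M (v |: D) =i PF e M D.
Proof.
move=> vD H p; rewrite !inE; case mp: (is_meas_path e M p) => //=.
case: (boolP (v \in p)) => vp.
  by rewrite (H p mp vp); apply/hasP; exists v => //; rewrite !inE eqxx.
apply: eq_in_has => y yp; rewrite !inE; case: (eqVneq y v) => [E|//].
by rewrite -E yp in vp.
Qed.

Lemma outer v k (S : {set T}) : v \notin M -> v \in S -> 0 < k -> k < #|~: M| ->
  k_identifiable e M k S -> k <= pi_v e M v.
Proof.
move=> vM vS k0 kN hk; rewrite leqNgt; apply/negP => hlt.
have hle : pi_v e M v <= k.-1 by lia.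
rewrite /pi_v in hle.
have subU (C : {set T}) x : C \subset ~: M -> x \notin M -> x |: C \subset ~: M.
  move=> CM xM; apply/subsetP => y; rewrite !inE => /orP[/eqP -> //|yC].
  by have := subsetP CM y yC; rewrite inE.
case: (bigmin_wit hle) => [hd | [m mM hm]].
- have hc : cut_size VH (aux_e e M M) (Some v) None <= k by lia.
  have [C [CM vC hC nc]] := cut_wit vM hc kN.
  set w := odflt v [pick x in C].
  have hw : #|C :\ w| < k.
    have := cardsD1 w C; rewrite /w; case: pickP => [x xC|h0] /=.
      by rewrite xC; lia.
    have : #|C| = 0 by apply: eq_card0 => x; exact: h0.
    lia.
  have CwM : C :\ w \subset ~: M by apply: subset_trans CM; apply: subsetDl.
  apply: (hk (v |: (C :\ w)) (C :\ w)) => //.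
  + exact: subU.
  + by rewrite cardsU1; case: (_ \notin _) => /=; lia.
  + lia.
  + by apply/eqP => /setP /(_ v); rewrite !inE eqxx vS (negbTE vC) andbF.
  + apply: PF_eq; first by rewrite !inE (negbTE vC) andbF.
    move=> p mp vp; apply/negPn/negP => hn.
    have [s1 [s2 [[p1 p2 l1 l2] [sub1 sub2 disj]]]] := meas_split mp vp vM.
    have av s : {subset s <= p} -> w \notin s -> all (fun y => y \notin C) s.
      move=> sub ws; apply/allP => y ys; have yp := sub y ys.
      have : y \notin C :\ w by apply: (hasPn hn).
      rewrite !inE negb_and negbK => /orP[/eqP E|//].
      by rewrite -E ys in ws.
    have seg s : path e v s -> last v s \in M -> {subset s <= p} -> w \notin s -> False.
      move=> ps ls sub ws.
      have [m _ /andP[mM /implyP h]] := seg_conn M ps vM vC ls (av s sub ws).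
      by move: nc; rewrite (h mM).
    case: (boolP (w \in s1)) => ws1.
      by apply: (seg s2 p2 l2 sub2); apply/negP => ws2; exact: disj w ws1 ws2.
    exact: (seg s1 p1 l1 sub1 ws1).
- have hk1 : k.-1 < #|~: M| by lia.
  have [C [CM vC hC nc]] := cut_wit vM hm hk1.
  apply: (hk (v |: C) C) => //.
  + exact: subU.
  + by rewrite cardsU1; case: (_ \notin _) => /=; lia.
  + lia.
  + by apply/eqP => /setP /(_ v); rewrite !inE eqxx vS (negbTE vC).
  + apply: PF_eq => // p mp vp; apply/negPn/negP => hn.
    have [s1 [s2 [[p1 p2 l1 l2] [sub1 sub2 disj]]]] := meas_split mp vp vM.
    have av s : {subset s <= p} -> all (fun y => y \notin C) s.
      by move=> sub; apply/allP => y /sub /(hasPn hn).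
    have [m1 m1s /andP[m1M h1]] := seg_conn (M :\ m) p1 vM vC l1 (av _ sub1).
    have [m2 m2s /andP[m2M h2]] := seg_conn (M :\ m) p2 vM vC l2 (av _ sub2).
    case: (eqVneq m1 m) => [E|ne].
      have ne2 : m2 != m by apply/eqP => E2; apply: (disj m1 m1s); rewrite E -E2.
      by move/implyP: h2; rewrite !inE ne2 m2M => /(_ isT) c; rewrite c in nc.
    by move/implyP: h1; rewrite !inE ne m1M => /(_ isT) c; rewrite c in nc.
Qed.

End G.

Theorem corollary5 (T : finType) (e : rel T) (M : {set T}) (k : nat) (S : {set T}) :
  symmetric e -> irreflexive e -> (forall x y : T, connect e x y) ->
  1 <= k <= #|~: M| - 1 ->
  max_k_identifiable e M k S ->
  [set v in ~: M | k.+1 <= pi_v e M v] \subset S /\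
  S \subset [set v in ~: M | k <= pi_v e M v].
Proof.
move=> esym _ _ /andP[k1 kN'] [SM Sk Smax].
have kN : k < #|~: M| by lia.
split.
  set I := [set v in ~: M | k.+1 <= pi_v e M v].
  have IM : I \subset ~: M by apply/subsetP => x; rewrite inE => /andP[].
  have kI : k_identifiable e M k (S :|: I).
    move=> F1 F2 F1M F2M h1 h2 hne.
    case: (boolP [exists x, (x \in F1 :&: (S :|: I)) != (x \in F2 :&: (S :|: I))])
      => [/existsP[x hx]|/existsPn H]; last first.
      by exfalso; move/eqP: hne; apply; apply/setP => x; move/negPn/eqP: (H x).
    case: (boolP (x \in S)) => xS.
      apply: Sk => //; apply/negP => /eqP /setP /(_ x).
      by rewrite !inE xS !andbT => E; move: hx; rewrite !inE xS !andbT E eqxx.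
    move: hx; rewrite !in_setI !in_setU (negbTE xS) /=.
    case xI: (x \in I); last by rewrite !andbF.
    rewrite !andbT => hx.
    have [xM hpi] : x \notin M /\ k.+1 <= pi_v e M x.
      by move: xI; rewrite !inE => /andP[-> ->].
    have key (G1 G2 : {set T}) : G2 \subset ~: M -> #|G2| <= k -> x \in G1 ->
        x \notin G2 -> distinguishable e M G1 G2.
      move=> G2M hG2 xG1 xG2 E.
      have [p [mp xp hn]] := inner_path esym xM hpi G2M xG2 hG2.
      have := E p; rewrite !inE mp /= (negbTE hn).
      by have -> : has (fun y => y \in G1) p by apply/hasP; exists x.
    move: hx; case x1: (x \in F1); case x2: (x \in F2) => //= _.
      by apply: key => //; rewrite x2.
    move=> E; apply: (key F2 F1 F1M h1 x2 _); first by rewrite x1.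
    by move=> p; rewrite E.
  have cardU : #|S :|: I| <= #|S|.
    by apply: Smax kI; rewrite subUset SM IM.
  have /eqP E : S == S :|: I by rewrite eqEcard subsetUl cardU.
  by rewrite E; exact: subsetUr.
apply/subsetP => v vS; have vM := subsetP SM v vS.
rewrite inE vM /=; apply: (outer esym _ vS k1 kN Sk).
by rewrite inE in vM.
Qed.
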